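(* Let $\mathrm{M}$ be a (loopless) matroid of rank $d+1$ with $d\ge2$. Then \[ \deg\Big(\big((d+2)c_2-2d\,c_1^2\big)\alpha^{d-2}\Big)=(3d+2)\Big(N_2(\mathrm{M})-\binom{d+1}{2}\Big)\ge0, \] where $N_2(\mathrm{M})$ is the number of rank-$2$ flats of $\mathrm{M}$.
   Context: For a loopless matroid $\mathrm{M}$ on ground set $E$ of rank $d+1$, its Chow ring is $A^*(\mathrm{M})=\mathbb{Z}[x_F : F \text{ a nonempty proper flat}]/(I+J)$, where $I$ is generated by $x_Fx_G$ for incomparable flats $F,G$ and $J$ by $\sum_{F\ni i}x_F-\sum_{F\ni j}x_F$ for $i,j\in E$. $\deg\colon A^d(\mathrm{M})\to\mathbb{Z}$ sends $x_{F_1}\cdots x_{F_d}$ to $1$ for every chain $F_1\subsetneq\cdots\subsetneq F_d$ of nonempty proper flats. $\alpha=\sum_{F\ni i}x_F$ (independent of $i$), $Z_k=\sum_{\operatorname{rk}F=k}x_F$, and $c(\mathrm{M})=\prod_{i=1}^d(1+Z_i)\cdot\prod_{i=0}^d(1+\alpha-\sum_{j=1}^iZ_{d+1-j})$ with $c_k$ its degree-$k$ part. *)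

(* Defs.v *)
From HB Require Import structures.
From mathcomp Require Import all_boot all_order all_algebra.
From mathcomp Require Import mpoly.

Set Implicit Arguments.
Unset Strict Implicit.
Unset Printing Implicit Defensive.

Import Order.TTheory GRing.Theory Num.Theory.
Local Open Scope ring_scope.

Record matroid (E : finType) := Matroid {
  mrk : {set E} -> nat;
  mrk0 : mrk set0 = 0%N;
  mrk_card : forall A, (mrk A <= #|A|)%N;
  mrk_mono : forall A B : {set E}, A \subset B -> (mrk A <= mrk B)%N;
  mrk_submod : forall A B : {set E}, (mrk (A :|: B) + mrk (A :&: B) <= mrk A + mrk B)%N
}.

Definition loopless (E : finType) (M : matroid E) : Prop :=
  forall e : E, mrk M [set e] = 1%N.

Definition mrank (E : finType) (M : matroid E) : nat := mrk M [set: E].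

Definition is_flat (E : finType) (M : matroid E) (F : {set E}) : bool :=
  [forall e, (e \notin F) ==> (mrk M F < mrk M (e |: F))%N].

Definition npflat (E : finType) (M : matroid E) (F : {set E}) : bool :=
  [&& is_flat M F, F != set0 & F != [set: E]].

Definition N2 (E : finType) (M : matroid E) : nat :=
  #|[set F : {set E} | is_flat M F & mrk M F == 2%N]|.

(* We take one variable for every subset of E; the variables x_S with S not a
   nonempty proper flat are killed by extra generators of the ideal, so the
   quotient is exactly Z[x_F : F nonempty proper flat]/(I+J). *)
Definition nv (E : finType) : nat := #|{set E}|.
Definition Pol (E : finType) := {mpoly int[nv E]}.

Definition xv (E : finType) (X : {set E}) : Pol E := 'X_(enum_rank X).

Definition genI (E : finType) (M : matroid E) : seq (Pol E) :=
  [seq xv F * xv G | F <- enum [pred F | npflat M F],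
                     G <- enum [pred G | npflat M G & ~~ ((F \subset G) || (G \subset F))]].

Definition sum_ni (E : finType) (M : matroid E) (i : E) : Pol E :=
  \sum_(F : {set E} | npflat M F && (i \in F)) xv F.

Definition genJ (E : finType) (M : matroid E) : seq (Pol E) :=
  [seq sum_ni M i - sum_ni M j | i <- enum E, j <- enum E].

Definition genK (E : finType) (M : matroid E) : seq (Pol E) :=
  [seq xv X | X <- enum [pred X | ~~ npflat M X]].

Definition gens (E : finType) (M : matroid E) : seq (Pol E) :=
  genI M ++ genJ M ++ genK M.

Definition in_ideal (E : finType) (g : seq (Pol E)) (p : Pol E) : Prop :=
  exists c : seq (Pol E), size c = size g /\
    p = \sum_(k < size g) c`_k * g`_k.

Definition ishom (E : finType) (k : nat) (p : Pol E) : bool :=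
  all (fun m => mdeg m == k) (msupp p).

Definition hpart (E : finType) (k : nat) (p : Pol E) : Pol E :=
  \sum_(m <- msupp p | mdeg m == k) p@_m *: 'X_[m].

(* A degree map: an additive map D on polynomials which, on homogeneous
   polynomials of degree d, factors through A^d(M) (vanishes on the ideal)
   and sends x_{F_1}...x_{F_d} to 1 for every strict chain of nonempty proper
   flats F_1 < ... < F_d.  Its restriction to degree-d classes is deg. *)
Definition is_deg_map (E : finType) (M : matroid E) (d : nat) (D : Pol E -> int) : Prop :=
  [/\ (forall p q, D (p + q) = D p + D q),
      (forall p, ishom d p -> in_ideal (gens M) p -> D p = 0) &
      (forall F : 'I_d -> {set E},
          (forall k, npflat M (F k)) ->
          (forall k l : 'I_d, (k < l)%N -> F k \proper F l) ->
          D (\prod_(k < d) xv (F k)) = 1)].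

Definition alpha (E : finType) (M : matroid E) (i : E) : Pol E := sum_ni M i.

Definition Zk (E : finType) (M : matroid E) (k : nat) : Pol E :=
  \sum_(F : {set E} | npflat M F && (mrk M F == k)) xv F.

Definition cM (E : finType) (M : matroid E) (d : nat) (i : E) : Pol E :=
  (\prod_(1 <= k < d.+1) (1 + Zk M k)) *
  (\prod_(0 <= k < d.+1)
      (1 + alpha M i - \sum_(1 <= j < k.+1) Zk M (d.+1 - j))).

Definition ck (E : finType) (M : matroid E) (d : nat) (i : E) (k : nat) : Pol E :=
  hpart k (cM M d i).

(* Main.v *)
Require Import Defs.
From HB Require Import structures.
From mathcomp Require Import all_boot all_order all_algebra.
From mathcomp Require Import mpoly.
From mathcomp Require Import zify ring lra.
Import Order.TTheory GRing.Theory Num.Theory.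
Local Open Scope ring_scope.
Set Implicit Arguments.
Unset Strict Implicit.


Section MatroidFacts.
Variables (E : finType) (M : matroid E).
Local Notation rk := (mrk M).

Lemma rk_add1 (A : {set E}) e : (rk (e |: A) <= (rk A).+1)%N.
Proof.
have := mrk_submod M [set e] A.
have := mrk_card M [set e]; rewrite cards1.
lia.
Qed.

Lemma rk_strict (F G : {set E}) : is_flat M F -> F \proper G -> (rk F < rk G)%N.
Proof.
move=> /forallP fl /properP [sFG [e eG eF]].
have := fl e; rewrite eF /= => lt.
apply: (leq_trans lt); apply: mrk_mono.
by rewrite subUset sub1set eG sFG.
Qed.

Lemma rk_union_cl (A B : {set E}) :
  (forall e, e \in B -> rk (e |: A) = rk A) -> rk (A :|: B) = rk A.
Proof.
move=> H.
suff: forall s : seq E, {subset s <= B} -> rk (A :|: [set x in s]) = rk A.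
  move=> /(_ (enum B)) h.
  have -> : B = [set x in enum B] by apply/setP=> x; rewrite inE mem_enum.
  by apply: h => x; rewrite mem_enum.
elim=> [|e s IH] sB.
  have -> : [set x in [::]] = set0 :> {set E} by apply/setP=> x; rewrite !inE.
  by rewrite setU0.
have -> : A :|: [set x in e :: s] = (A :|: [set x in s]) :|: (e |: A).
  by apply/setP=> x; rewrite !inE; case: (x == e); case: (x \in A); case: (x \in s).
have IH' := IH (fun x xs => sB x ltac:(by rewrite inE xs orbT)).
have He := H e (sB e (mem_head _ _)).
have h1 := mrk_submod M (A :|: [set x in s]) (e |: A).
have h2 : (rk A <= rk ((A :|: [set x in s]) :&: (e |: A)))%N.
  apply: mrk_mono; rewrite subsetI subsetUl /=; exact: subsetUr.
have h3 : (rk (A :|: [set x in s]) <= rk ((A :|: [set x in s]) :|: (e |: A)))%N.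
  exact/mrk_mono/subsetUl.
apply/eqP; rewrite eqn_leq; apply/andP; split; last first.
  apply: (leq_trans _ h3); apply/mrk_mono/subsetUl.
lia.
Qed.

Definition cl (A : {set E}) : {set E} := [set e | rk (e |: A) == rk A].

Lemma sub_cl (A : {set E}) : A \subset cl A.
Proof. by apply/subsetP=> e eA; rewrite inE (setUidPr _) ?sub1set. Qed.

Lemma rk_cl (A : {set E}) : rk (cl A) = rk A.
Proof.
have -> : cl A = A :|: cl A by apply/esym/setUidPr/sub_cl.
by apply: rk_union_cl => e; rewrite inE => /eqP.
Qed.

Lemma cl_flat (A : {set E}) : is_flat M (cl A).
Proof.
apply/forallP=> e; apply/implyP=> ecl.
rewrite ltn_neqAle mrk_mono ?subsetUr // andbT.
apply: contra ecl; rewrite rk_cl => /eqP h.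
rewrite inE eqn_leq [(rk A <= _)%N]mrk_mono ?subsetUr // andbT h.
by apply/mrk_mono/setUS/sub_cl.
Qed.

Lemma cl_min (A F : {set E}) : A \subset F -> is_flat M F -> cl A \subset F.
Proof.
move=> sAF /forallP fl; apply/subsetP=> e; rewrite inE => /eqP he.
apply/negPn/negP=> eF.
have := fl e; rewrite eF /= => lt.
have h1 := mrk_submod M F (e |: A).
have h2 : (rk A <= rk (F :&: (e |: A)))%N.
  by apply: mrk_mono; rewrite subsetI sAF subsetUr.
have e1 : F :|: (e |: A) = e |: F.
  apply/setP=> x; rewrite !inE; case: (x == e); rewrite ?orbT //=.
  by case xF: (x \in F) => //=; apply/negbTE/negP=> xA; move: xF; rewrite (subsetP sAF).
rewrite e1 in h1.
lia.
Qed.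

Lemma flat_eq_cl (A G : {set E}) : is_flat M G -> A \subset G -> (rk G <= rk A)%N -> G = cl A.
Proof.
move=> fG sAG le; apply/eqP; rewrite eqEsubset cl_min // andbT.
apply/subsetP=> e eG; rewrite inE eqn_leq [(rk A <= _)%N]mrk_mono ?subsetUr // andbT.
apply: leq_trans le; apply/mrk_mono; by rewrite subUset sub1set eG sAG.
Qed.

Hypothesis loopM : loopless M.

Lemma flat0 : is_flat M set0.
Proof. by apply/forallP=> e; apply/implyP=> _; rewrite setU0 loopM mrk0. Qed.

Lemma rk_ge1 (F : {set E}) : F != set0 -> (1 <= rk F)%N.
Proof.
case/set0Pn=> e eF; rewrite -(loopM e); apply/mrk_mono; by rewrite sub1set.
Qed.

Lemma rk_lt_top (F : {set E}) : is_flat M F -> F != setT -> (rk F < rk setT)%N.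
Proof.
move=> fF nT; apply: rk_strict => //; by rewrite properT.
Qed.

End MatroidFacts.


Section Ideal.
Variables (E : finType) (g : seq (Pol E)).
Local Notation inI := (in_ideal g).

Lemma inI0 : inI 0.
Proof.
exists (mkseq (fun _ => 0) (size g)); rewrite size_mkseq; split => //.
by rewrite big1 // => k _; rewrite nth_mkseq // mul0r.
Qed.

Lemma inID p q : inI p -> inI q -> inI (p + q).
Proof.
move=> [c1 [s1 ->]] [c2 [s2 ->]].
exists (mkseq (fun k => c1`_k + c2`_k) (size g)); rewrite size_mkseq; split => //.
rewrite -big_split /=; apply: eq_bigr => k _; by rewrite nth_mkseq // mulrDl.
Qed.

Lemma inIM p q : inI q -> inI (p * q).
Proof.
move=> [c [s ->]].
exists (mkseq (fun k => p * c`_k) (size g)); rewrite size_mkseq; split => //.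
rewrite mulr_sumr; apply: eq_bigr => k _; by rewrite nth_mkseq // mulrA.
Qed.

Lemma inIMr p q : inI q -> inI (q * p).
Proof. by rewrite mulrC; apply: inIM. Qed.

Lemma inIN p : inI p -> inI (- p).
Proof. by move=> h; rewrite -mulN1r; apply: inIM. Qed.

Lemma inIB p q : inI p -> inI q -> inI (p - q).
Proof. by move=> hp hq; apply/inID/inIN. Qed.

Lemma inI_gen p : p \in g -> inI p.
Proof.
move=> pg.
exists (mkseq (fun k => (k == index p g)%:R) (size g)); rewrite size_mkseq; split => //.
have ip : (index p g < size g)%N by rewrite index_mem.
rewrite (bigD1 (Ordinal ip)) //= big1 ?addr0.
  by rewrite nth_mkseq // eqxx mul1r nth_index.
move=> k nk; rewrite nth_mkseq //.
suff -> : (nat_of_ord k == index p g) = false by rewrite mul0r.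
by apply/negbTE; apply: contra nk => /eqP h; apply/eqP/val_inj.
Qed.

Lemma inI_sum (I : Type) (r : seq I) (P : pred I) (F : I -> Pol E) :
  (forall x, P x -> inI (F x)) -> inI (\sum_(x <- r | P x) F x).
Proof.
move=> h; elim/big_rec: _ => [|x y Px iy]; first exact: inI0.
by apply: inID => //; apply: h.
Qed.

End Ideal.

Section DegMap.
Variables (E : finType) (M : matroid E) (d : nat) (D : Pol E -> int).
Hypothesis hD : is_deg_map M d D.

Lemma DD p q : D (p + q) = D p + D q.
Proof. by case: hD. Qed.

Lemma D0 : D 0 = 0.
Proof. have := DD 0 0; rewrite addr0 => h; lia. Qed.

Lemma DN p : D (- p) = - D p.
Proof. by apply/eqP; rewrite -subr_eq0 opprK -DD addNr D0. Qed.

Lemma DB p q : D (p - q) = D p - D q.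
Proof. by rewrite DD DN. Qed.

Lemma Dsum (I : Type) (r : seq I) (P : pred I) (F : I -> Pol E) :
  D (\sum_(x <- r | P x) F x) = \sum_(x <- r | P x) D (F x).
Proof. elim: r => [|x r IH]; rewrite ?big_nil ?big_cons ?D0 //; by case: (P x); rewrite ?DD IH. Qed.

Lemma DMn p k : D (p *+ k) = D p *+ k.
Proof. by elim: k => [|k IH]; rewrite ?mulr0n ?D0 // !mulrS DD IH. Qed.

Lemma DZ (n : int) p : D (n *: p) = n * D p.
Proof.
rewrite -[n in n *: _]intz scaler_int.
case: n => k.
  have -> : p *~ Posz k = p *+ k by [].
  by rewrite DMn -mulr_natl natz.
have -> : p *~ Negz k = - (p *+ k.+1) by [].
by rewrite DN DMn -mulr_natl natz NegzE mulNr.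
Qed.

Lemma Dhom p : p \is d.-homog -> in_ideal (gens M) p -> D p = 0.
Proof. by case: hD => _ h _ hp; apply: h; rewrite /ishom -dhomogE. Qed.

Lemma Deq p q : p \is d.-homog -> q \is d.-homog -> in_ideal (gens M) (p - q) ->
  D p = D q.
Proof.
move=> hp hq hI; have := @Dhom (p - q) (rpredB hp hq) hI.
by rewrite DB => /eqP; rewrite subr_eq0 => /eqP.
Qed.

End DegMap.


Section Chow.
Variables (E : finType) (M : matroid E) (d : nat) (i : E) (D : Pol E -> int).
Hypothesis loopM : loopless M.
Hypothesis hrank : mrk M setT = d.+1.
Hypothesis hd : (2 <= d)%N.
Hypothesis hD : is_deg_map M d D.
Local Notation rk := (mrk M).
Local Notation inI := (in_ideal (gens M)).
Local Notation al := (alpha M i).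

Definition X (s : seq {set E}) : Pol E := \prod_(F <- s) xv F.
Definition prel : rel {set E} := fun F G => F \proper G.

Lemma xv_hom (F : {set E}) : xv F \is 1.-homog.
Proof. by rewrite /xv dhomogX /= mdeg1. Qed.

Lemma X_hom s : X s \is (size s).-homog.
Proof.
elim: s => [|F s IH]; rewrite /X ?big_nil ?big_cons; first exact: dhomog1.
exact: (dhomogM (xv_hom F) IH).
Qed.

Lemma sni_hom j : sum_ni M j \is 1.-homog.
Proof. by apply: rpred_sum => F _; apply: xv_hom. Qed.

Lemma alpow_hom n : al ^+ n \is n.-homog.
Proof. by have := dhomogMn n (sni_hom i); rewrite mul1n. Qed.

Lemma inI_J j k : inI (sum_ni M j - sum_ni M k).
Proof.
apply: inI_gen; rewrite /gens !mem_cat; apply/orP; right; apply/orP; left.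
by apply: (allpairs_f (fun a b => sum_ni M a - sum_ni M b)); rewrite mem_enum.
Qed.

Lemma inI_incomp (F G : {set E}) : npflat M F -> npflat M G ->
  ~~ (F \subset G) -> ~~ (G \subset F) -> inI (xv F * xv G).
Proof.
move=> nF nG sFG sGF.
apply: inI_gen; rewrite /gens !mem_cat; apply/orP; left.
apply: (allpairs_f_dep (fun F G => xv F * xv G)); rewrite mem_enum //.
by rewrite inE nG negb_or sFG sGF.
Qed.

Lemma npflat_flat (F : {set E}) : npflat M F -> is_flat M F.
Proof. by case/and3P. Qed.
Lemma npflat_ne0 (F : {set E}) : npflat M F -> F != set0.
Proof. by case/and3P. Qed.
Lemma npflat_neT (F : {set E}) : npflat M F -> F != setT.
Proof. by case/and3P. Qed.

Lemma npflat_rk (F : {set E}) : npflat M F -> (1 <= rk F <= d)%N.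
Proof.
move=> nF; rewrite (rk_ge1 loopM (npflat_ne0 nF)) /=.
have := rk_lt_top (npflat_flat nF) (npflat_neT nF); rewrite hrank; lia.
Qed.

Lemma chain_rk (x : {set E}) s : is_flat M x -> all (is_flat M) s -> path prel x s ->
  (rk x + size s <= rk (last x s))%N.
Proof.
elim: s x => [|y s IH] x fx /=; first by rewrite addn0.
move=> /andP[fy fs] /andP[xy ps].
have := rk_strict fx xy; have := IH y fy fs ps; lia.
Qed.

Lemma flatE (F : {set E}) : is_flat M F -> forall e, e \notin F -> (rk F < rk (e |: F))%N.
Proof. by move=> /forallP h e eF; have := h e; rewrite eF. Qed.

Lemma sum_unique (P Q : pred {set E}) G0 :
  (forall G, P G && Q G = (G == G0)) -> \sum_(G | P G) (Q G)%:R = 1 :> int.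
Proof.
move=> h; rewrite big_mkcond /= (bigD1 G0) //= big1.
  by have := h G0; rewrite eqxx; case: (P G0); case: (Q G0).
move=> G nG; have := h G; rewrite (negbTE nG).
by case: (P G); case: (Q G).
Qed.

Lemma chain_deg n s : path prel set0 s -> all (npflat M) s -> (size s + n)%N = d ->
  D (al ^+ n * X s) = (rk (last set0 s) == size s)%:R.
Proof.
have allfl : forall s, all (npflat M) s -> all (is_flat M) s.
  by move=> s0 h; apply/allP=> x /(allP h) /npflat_flat.
elim: n s => [|n IH] s hp ha hs.
  rewrite addn0 in hs; rewrite expr0 mul1r.
  case: hD => _ _ h3.
  have e : \prod_(k < d) xv (nth set0 s k) = X s.
    by rewrite /X [in RHS](big_nth set0) [in RHS]big_mkord hs.
  have ->: (rk (last set0 s) == size s) = true.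
    have := chain_rk (flat0 loopM) (allfl _ ha) hp; rewrite mrk0 add0n => h1.
    have : last set0 s \in set0 :: s by apply: mem_last.
    rewrite inE; case/orP => [/eqP|ls].
      move=> e0; rewrite e0 in h1 *; move: h1; rewrite mrk0; lia.
    have := npflat_rk (allP ha _ ls); move: h1; lia.
  rewrite -e h3 //.
    by move=> k; apply: (all_nthP set0 ha); rewrite hs.
  move=> k l kl; apply: (sorted_ltn_nth (leT := prel) _ set0 (path_sorted hp)) => //.
  - by move=> a b c; apply: proper_trans.
  - by rewrite inE hs.
  - by rewrite inE hs.
set T := last set0 s.
have fT : is_flat M T.
  have : T \in set0 :: s by apply: mem_last.
  rewrite inE; case/orP => [/eqP ->|ls]; first exact: flat0 loopM.
  exact/npflat_flat/(allP ha).
have TnT : T != setT.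
  have : T \in set0 :: s by apply: mem_last.
  rewrite inE; case/orP => [/eqP ->|ls]; last exact/npflat_neT/(allP ha).
  by apply/eqP=> /setP /(_ i); rewrite !inE.
have [j _ jT] : exists2 j, j \in setT & j \notin T.
  by apply/subsetPn; apply: contra TnT => h; rewrite eqEsubset h subsetT.
have hom1 : forall p, p \is (size s).+1.-homog -> al ^+ n * p \is d.-homog.
  move=> p hp'; have := dhomogM (alpow_hom n) hp'.
  by have -> : (n + (size s).+1 = d)%N by rewrite -hs; lia.
rewrite exprSr -mulrA.
have step1 : D (al ^+ n * (al * X s)) = D (al ^+ n * (sum_ni M j * X s)).
  apply: (Deq hD); rewrite ?hom1 //.
  - by have := dhomogM (sni_hom i) (X_hom s); rewrite add1n.
  - by have := dhomogM (sni_hom j) (X_hom s); rewrite add1n.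
  have -> : al ^+ n * (al * X s) - al ^+ n * (sum_ni M j * X s) =
            (al - sum_ni M j) * (al ^+ n * X s) by ring.
  by apply: inIMr; apply: inI_J.
rewrite step1 /sum_ni mulr_suml mulr_sumr (Dsum hD).
rewrite (bigID [pred G : {set E} | T \proper G]) /=.
rewrite [X in _ + X = _]big1 ?addr0; last first.
  move=> G /andP[/andP[nG jG] nTG].
  apply: (Dhom hD).
    by apply: hom1; have := dhomogM (xv_hom G) (X_hom s); rewrite add1n.
  case: s hp ha hs @T fT TnT jT nTG {step1 hom1} => [|x s'] hp ha hs T fT TnT jT nTG.
    by move: nTG; rewrite /T /= proper0 npflat_ne0.
  have Ts : T \in x :: s' by have := mem_last x s'; rewrite /T /=.
  rewrite /X (big_rem _ Ts) /=.
  set R := \prod_(y <- _) _.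
  rewrite (_ : al ^+ n * (xv G * (xv T * R)) = (al ^+ n * R) * (xv G * xv T)); last by ring.
  apply: inIM; apply: inI_incomp => //; first exact: (allP ha).
    by apply/subsetPn; exists j.
  by apply: contra nTG => h; rewrite properEneq h andbT; apply/eqP=> e; move: jT; rewrite e jG.
rewrite (eq_bigr (fun G => (rk G == (size s).+1)%:R)); last first.
  move=> G /andP[/andP[nG jG] TG].
  have -> : al ^+ n * (xv G * X s) = al ^+ n * X (rcons s G).
    by rewrite /X -cats1 big_cat big_seq1 [xv G * _]mulrC.
  rewrite IH ?last_rcons ?size_rcons //.
  - by rewrite rcons_path hp.
  - by rewrite all_rcons nG.
  - by rewrite -hs addSnnS.
have h1 := chain_rk (flat0 loopM) (allfl _ ha) hp; rewrite mrk0 add0n in h1.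
case: eqP => hT; last first.
  rewrite big1 // => G /andP[_ TG]; have := rk_strict fT TG.
  by case: eqP => // ->; move: hT h1; rewrite -/T; lia.
apply: (sum_unique (Q := fun G => rk G == (size s).+1)) => G.
have hjT : rk (j |: T) = (size s).+1.
  have := flatE fT jT; have := rk_add1 M T j; rewrite -/T in hT; lia.
apply/idP/idP.
  case/andP=> /andP[/andP[nG jG] TG] /eqP rG; apply/eqP.
  apply: (flat_eq_cl (A := j |: T)); first exact: npflat_flat.
    by rewrite subUset sub1set jG; case/andP: TG.
  by rewrite rG hjT.
move/eqP=> ->.
have jcl : j \in cl M (j |: T) by apply/(subsetP (sub_cl _ _))/setU11.
rewrite rk_cl hjT eqxx andbT jcl andbT.
apply/andP; split.
  rewrite /npflat cl_flat /=; apply/andP; split.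
    by apply/set0Pn; exists j.
  apply/eqP=> e; have := rk_cl M (j |: T); rewrite e hrank hjT.
  move: hs; lia.
apply/properP; split; last by exists j.
apply: subset_trans (sub_cl _ _); exact: subsetUr.
Qed.

End Chow.


Section Bform.
Variables (E : finType) (M : matroid E) (d : nat) (i : E) (D : Pol E -> int).
Hypothesis loopM : loopless M.
Hypothesis hrank : mrk M setT = d.+1.
Hypothesis hd : (2 <= d)%N.
Hypothesis hD : is_deg_map M d D.
Local Notation rk := (mrk M).
Local Notation inI := (in_ideal (gens M)).
Local Notation al := (alpha M i).
Local Notation Z := (Zk M).

Definition Bf (p q : Pol E) : int := D (p * q * al ^+ (d - 2)).

Lemma Bf_sym p q : Bf p q = Bf q p.
Proof. by rewrite /Bf (mulrC p q). Qed.
Lemma BfDl p p' q : Bf (p + p') q = Bf p q + Bf p' q.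
Proof. by rewrite /Bf !mulrDl (DD hD). Qed.
Lemma BfZl (n : int) p q : Bf (n *: p) q = n * Bf p q.
Proof. by rewrite /Bf -!scalerAl (DZ hD). Qed.
Lemma BfNl p q : Bf (- p) q = - Bf p q.
Proof. by rewrite /Bf !mulNr (DN hD). Qed.
Lemma Bf_suml (I : Type) (r : seq I) (P : pred I) (F : I -> Pol E) q :
  Bf (\sum_(x <- r | P x) F x) q = \sum_(x <- r | P x) Bf (F x) q.
Proof. by rewrite /Bf !mulr_suml (Dsum hD). Qed.
Lemma BfDr p q q' : Bf p (q + q') = Bf p q + Bf p q'.
Proof. by rewrite !(Bf_sym p) BfDl. Qed.
Lemma BfZr (n : int) p q : Bf p (n *: q) = n * Bf p q.
Proof. by rewrite !(Bf_sym p) BfZl. Qed.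
Lemma Bf_sumr (I : Type) (r : seq I) (P : pred I) (F : I -> Pol E) q :
  Bf q (\sum_(x <- r | P x) F x) = \sum_(x <- r | P x) Bf q (F x).
Proof. by rewrite Bf_sym Bf_suml; apply: eq_bigr => x _; rewrite Bf_sym. Qed.

Let e := (d - 2)%N.
Let ed : d = e.+2.
Proof. rewrite /e; lia. Qed.

Lemma B_aa : Bf al al = 1.
Proof.
rewrite /Bf (_ : al * al * al ^+ (d - 2) = al ^+ d * X [::]); last first.
  by rewrite /X big_nil mulr1 -/e ed !exprS mulrA.
by rewrite (chain_deg i loopM hrank hd hD (n := d) (s := [::])) //= mrk0.
Qed.

Lemma B_ax G : npflat M G -> Bf al (xv G) = (rk G == 1%N)%:R.
Proof.
move=> nG.
rewrite /Bf (_ : al * xv G * al ^+ (d - 2) = al ^+ e.+1 * X [:: G]); last first.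
  by rewrite /X big_cons big_nil mulr1 -/e exprS; ring.
rewrite (chain_deg i loopM hrank hd hD (n := e.+1) (s := [:: G])) //=.
all: try by rewrite /prel proper0 (npflat_ne0 nG).
all: try by rewrite nG.
all: by rewrite ed.
Qed.

Lemma B_chain F G : npflat M F -> npflat M G -> F \proper G ->
  Bf (xv F) (xv G) = (rk G == 2%N)%:R.
Proof.
move=> nF nG FG.
rewrite /Bf (_ : xv F * xv G * al ^+ (d - 2) = al ^+ e * X [:: F; G]); last first.
  by rewrite /X !big_cons big_nil mulr1 -/e; ring.
rewrite (chain_deg i loopM hrank hd hD (n := e) (s := [:: F; G])) //=.
all: try by rewrite /prel proper0 (npflat_ne0 nF) FG.
all: try by rewrite nF nG.
all: by rewrite ed.
Qed.

Lemma B_incomp F G : npflat M F -> npflat M G -> ~~ (F \subset G) -> ~~ (G \subset F) ->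
  Bf (xv F) (xv G) = 0.
Proof.
move=> nF nG h1 h2; apply: (Dhom hD).
  by have := dhomogM (dhomogM (xv_hom F) (xv_hom G)) (alpow_hom M i (d - 2)); rewrite -/e ed.
by apply: inIMr; apply: inI_incomp.
Qed.

Lemma B_diag F i' : npflat M F -> i' \in F ->
  Bf (xv F) (xv F) = (rk F == 1%N)%:R
     - \sum_(G | npflat M G && (i' \in G) && (G \proper F)) (rk F == 2%N)%:R
     - \sum_(G | npflat M G && (i' \in G) && (F \proper G)) (rk G == 2%N)%:R.
Proof.
move=> nF iF.
have e1 : (rk F == 1%N)%:R = \sum_(G | npflat M G && (i' \in G)) Bf (xv G) (xv F).
  rewrite -B_ax // -Bf_suml.
  apply: (Deq hD).
  - by have := dhomogM (dhomogM (sni_hom M i) (xv_hom F)) (alpow_hom M i (d - 2)); rewrite -/e ed.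
  - by have := dhomogM (dhomogM (sni_hom M i') (xv_hom F)) (alpow_hom M i (d - 2)); rewrite -/e ed.
  rewrite (_ : al * xv F * al ^+ (d - 2) - sum_ni M i' * xv F * al ^+ (d - 2) =
     (al - sum_ni M i') * (xv F * al ^+ (d - 2))); last by rewrite /alpha; ring.
  by apply: inIMr; apply: inI_J.
rewrite (bigD1 F) /= in e1; last by rewrite nF iF.
rewrite (bigID [pred G : {set E} | G \proper F]) /= in e1.
rewrite [X in _ = _ + (_ + X)](bigID [pred G : {set E} | F \proper G]) /= in e1.
rewrite [X in _ + (_ + (_ + X))]big1 ?addr0 in e1; last first.
  move=> G /andP[/andP[/andP[/andP[nG _] GF] nGF] nFG].
  apply: B_incomp => //.
    by apply: contra nGF => h; rewrite properEneq GF.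
  by apply: contra nFG => h; rewrite properEneq eq_sym GF.
rewrite (eq_bigl (fun G => npflat M G && (i' \in G) && (G \proper F))) in e1; last first.
  move=> G /=; case h: (G \proper F); rewrite ?andbF ?andbT //.
  by rewrite (proper_neq h) andbT.
rewrite (eq_bigr (fun G => (rk F == 2%N)%:R)) in e1; last first.
  move=> G /andP[/andP[nG _] GF]; by rewrite B_chain.
rewrite [X in _ = _ + (_ + X)](eq_bigl (fun G => npflat M G && (i' \in G) && (F \proper G))) in e1; last first.
  move=> G /=; case h: (F \proper G); rewrite ?andbF ?andbT //.
  rewrite eq_sym (proper_neq h) andbT.
  case h2: (G \proper F); last by rewrite andbT.
  by have := proper_trans h h2; rewrite properxx.
rewrite [X in _ = _ + (_ + X)](eq_bigr (fun G => (rk G == 2%N)%:R)) in e1; last first.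
  move=> G /andP[/andP[nG _] FG]; by rewrite Bf_sym B_chain.
rewrite e1; ring.
Qed.

Definition N1 : int := \sum_(G | npflat M G && (rk G == 1%N)) 1.
Definition N2' : int := \sum_(G | npflat M G && (rk G == 2%N)) 1.
Definition PP : int := \sum_(F | npflat M F && (rk F == 1%N))
   \sum_(G | npflat M G && (rk G == 2%N)) (F \proper G)%:R.

Lemma np_strict (F G : {set E}) : npflat M F -> F \proper G -> (rk F < rk G)%N.
Proof. by move=> nF; apply: rk_strict; apply: npflat_flat. Qed.

Lemma np_incomp_rk (F G : {set E}) : npflat M F -> npflat M G -> F != G -> rk F = rk G ->
  ~~ (F \subset G) /\ ~~ (G \subset F).
Proof.
move=> nF nG nFG r; split; apply/negP => h.
  have FG : F \proper G by rewrite properEneq nFG h.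
  by have := np_strict nF FG; rewrite r ltnn.
have GF : G \proper F by rewrite properEneq eq_sym nFG h.
by have := np_strict nG GF; rewrite r ltnn.
Qed.

Lemma BaZ1 : Bf al (Z 1) = N1.
Proof.
rewrite /Zk Bf_sumr; apply: eq_bigr => G /andP[nG /eqP r].
by rewrite B_ax // r.
Qed.

Lemma BaZ2 : Bf al (Z 2) = 0.
Proof.
rewrite /Zk Bf_sumr big1 // => G /andP[nG /eqP r].
by rewrite B_ax // r.
Qed.

Lemma BZ11 : Bf (Z 1) (Z 1) = N1 - PP.
Proof.
rewrite /Zk Bf_suml /N1 /PP -sumrB; apply: eq_bigr => F /andP[nF /eqP rF].
rewrite Bf_sumr (bigD1 F) /=; last by rewrite nF rF.
rewrite big1 ?addr0; last first.
  move=> G /andP[/andP[nG /eqP rG] nGF].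
  have [h1 h2] := np_incomp_rk nG nF nGF (etrans rG (esym rF)).
  by rewrite B_incomp.
case/set0Pn: (npflat_ne0 nF) => i' iF.
rewrite (B_diag nF iF) rF /= big1 // subr0.
congr (_ - _).
rewrite [LHS]big_mkcond [RHS]big_mkcond; apply: eq_bigr => G _ /=.
case: (npflat M G) => //=; case FG: (F \proper G) => /=.
  by rewrite (subsetP (proper_sub FG) _ iF) /=; case: (rk G == 2%N).
by rewrite andbF; case: (rk G == 2%N).
Qed.

Lemma BZ12 : Bf (Z 1) (Z 2) = PP.
Proof.
rewrite /Zk Bf_suml; apply: eq_bigr => F /andP[nF /eqP rF].
rewrite Bf_sumr; apply: eq_bigr => G /andP[nG /eqP rG].
case FG: (F \proper G); first by rewrite B_chain // rG.
apply: B_incomp => //.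
  apply/negP => h; move: FG; rewrite properEneq h andbT => /negbT; rewrite negbK => /eqP ee.
  by move: rF; rewrite ee rG.
apply/negP => h; have := mrk_mono M h; rewrite rF rG.
by [].
Qed.

Lemma BZ22 : Bf (Z 2) (Z 2) = - N2'.
Proof.
rewrite /Zk Bf_suml /N2' -sumrN; apply: eq_bigr => F /andP[nF /eqP rF].
rewrite Bf_sumr (bigD1 F) /=; last by rewrite nF rF.
rewrite big1 ?addr0; last first.
  move=> G /andP[/andP[nG /eqP rG] nGF].
  have [h1 h2] := np_incomp_rk nG nF nGF (etrans rG (esym rF)).
  by rewrite B_incomp.
case/set0Pn: (npflat_ne0 nF) => i' iF.
rewrite (B_diag nF iF) rF /=.
rewrite [X in _ - _ - X]big1; last first.
  move=> G /andP[_ FG]; have := np_strict nF FG; rewrite rF.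
  by case: (rk G) => [|[|[|]]].
rewrite (_ : \sum_(G | npflat M G && (i' \in G) && (G \proper F)) 1 = 1 :> int); first by rewrite sub0r subr0.
apply: (@sum_unique _ _ (fun _ => true) (cl M [set i'])).
move=> G; rewrite andbT; apply/idP/eqP.
  case/andP=> /andP[nG iG] GF.
  apply: flat_eq_cl; first exact: npflat_flat.
    by rewrite sub1set.
  rewrite loopM; have := np_strict nG GF; have := npflat_rk loopM hrank hd nG.
  rewrite rF; lia.
move=> ->.
have r1 : rk (cl M [set i']) = 1%N by rewrite rk_cl loopM.
have icl : i' \in cl M [set i'] by apply/(subsetP (sub_cl _ _)); rewrite inE.
rewrite icl andbT; apply/andP; split.
  rewrite /npflat cl_flat /=; apply/andP; split.
    by apply/set0Pn; exists i'.
  by apply/eqP=> ee; move: r1; rewrite ee hrank; lia.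
rewrite properEneq; apply/andP; split.
  by apply/eqP=> ee; move: r1; rewrite ee rF.
by apply: cl_min; [rewrite sub1set | apply: npflat_flat].
Qed.

Lemma B_hiF (F G : {set E}) : npflat M F -> (3 <= rk F)%N -> npflat M G -> Bf (xv F) (xv G) = 0.
Proof.
move=> nF r3 nG.
case FG: (F \proper G).
  rewrite B_chain //; have := np_strict nF FG.
  by case: eqP => // ->; lia.
case GF: (G \proper F).
  rewrite Bf_sym B_chain //; by case: eqP => // r; move: r3; rewrite r.
case ee: (F == G).
  move/eqP: ee => ee; subst G.
  case/set0Pn: (npflat_ne0 nF) => i' iF.
  rewrite (B_diag nF iF).
  rewrite big1; last by move=> *; case: eqP => // r; move: r3; rewrite r.
  rewrite big1; last first.
    move=> G /andP[_ FG']; have := np_strict nF FG'.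
    by case: eqP => // ->; lia.
  by case: eqP => // r; move: r3; rewrite r.
apply: B_incomp => //.
  by apply/negP => h; move: FG; rewrite properEneq ee h.
by apply/negP => h; move: GF; rewrite properEneq eq_sym ee h.
Qed.

Definition lspan (q : Pol E) := exists c : {set E} -> int,
  q = \sum_(G | npflat M G) c G *: xv G.
Definition hspan (q : Pol E) := exists c : {set E} -> int,
  q = \sum_(G | npflat M G && (3 <= rk G)%N) c G *: xv G.

Lemma B_hi h q : hspan h -> lspan q -> Bf h q = 0.
Proof.
move=> [c ->] [c' ->]; rewrite Bf_suml big1 // => F /andP[nF r3].
rewrite BfZl Bf_sumr big1 ?mulr0 // => G nG.
by rewrite BfZr B_hiF // mulr0.
Qed.

End Bform.


Section Coord.
Variables (E : finType) (M : matroid E) (d : nat) (i : E) (D : Pol E -> int).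
Hypothesis loopM : loopless M.
Hypothesis hrank : mrk M setT = d.+1.
Hypothesis hd : (2 <= d)%N.
Hypothesis hD : is_deg_map M d D.
Local Notation rk := (mrk M).
Local Notation al := (alpha M i).
Local Notation Z := (Zk M).
Local Notation lspan := (lspan M).
Local Notation hspan := (hspan M).
Local Notation Bf := (Bf M d i D).

Lemma span_add p q : lspan p -> lspan q -> lspan (p + q).
Proof.
move=> [c1 ->] [c2 ->]; exists (fun G => c1 G + c2 G).
by rewrite -big_split; apply: eq_bigr => G _; rewrite scalerDl.
Qed.

Lemma span_scale (n : int) p : lspan p -> lspan (n *: p).
Proof.
move=> [c ->]; exists (fun G => n * c G).
by rewrite scaler_sumr; apply: eq_bigr => G _; rewrite scalerA.
Qed.

Lemma span_hi p : hspan p -> lspan p.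
Proof.
move=> [c ->]; exists (fun G => if (3 <= rk G)%N then c G else 0).
rewrite big_mkcondr; apply: eq_bigr => G _; by case: ifP; rewrite ?scale0r.
Qed.

Lemma span_al : lspan al.
Proof.
exists (fun G : {set E} => (i \in G)%:R).
rewrite /alpha /sum_ni big_mkcondr; apply: eq_bigr => G _.
by case: ifP; rewrite ?scale0r ?scale1r.
Qed.

Lemma span_Z k : lspan (Z k).
Proof.
exists (fun G : {set E} => (rk G == k)%:R).
rewrite /Zk big_mkcondr; apply: eq_bigr => G _.
by case: ifP; rewrite ?scale0r ?scale1r.
Qed.

Lemma hi_add p q : hspan p -> hspan q -> hspan (p + q).
Proof.
move=> [c1 ->] [c2 ->]; exists (fun G => c1 G + c2 G).
by rewrite -big_split; apply: eq_bigr => G _; rewrite scalerDl.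
Qed.

Lemma hi_scale (n : int) p : hspan p -> hspan (n *: p).
Proof.
move=> [c ->]; exists (fun G => n * c G).
by rewrite scaler_sumr; apply: eq_bigr => G _; rewrite scalerA.
Qed.

Lemma hi0 : hspan 0.
Proof. by exists (fun _ => 0); rewrite big1 // => G _; rewrite scale0r. Qed.

Lemma hi_Z k : (3 <= k)%N -> hspan (Z k).
Proof.
move=> k3; exists (fun G : {set E} => (rk G == k)%:R).
rewrite /Zk big_mkcond [RHS]big_mkcond; apply: eq_bigr => G _.
case: (npflat M G) => //=.
case: eqP => [->|_]; first by rewrite k3 scale1r.
by case: ifP; rewrite ?scale0r.
Qed.

Lemma Z0 : Z 0 = 0.
Proof.
rewrite /Zk big1 // => G /andP[nG /eqP r].
by have := npflat_rk loopM hrank hd nG; rewrite r.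
Qed.

Definition mcoord (l : Pol E) (u a b : int) :=
  exists h, hspan h /\ l = u *: al + a *: Z 1 + b *: Z 2 + h.

Lemma coord_span l u a b : mcoord l u a b -> lspan l.
Proof.
move=> [h [hh ->]].
apply: span_add; last exact: span_hi.
apply: span_add; first apply: span_add.
all: apply: span_scale; [exact: span_al || exact: span_Z].
Qed.

Lemma coord_add l u a b l' u' a' b' : mcoord l u a b -> mcoord l' u' a' b' ->
  mcoord (l + l') (u + u') (a + a') (b + b').
Proof.
move=> [h [hh ->]] [h' [hh' ->]]; exists (h + h'); split; first exact: hi_add.
by rewrite !scalerDl; ring.
Qed.

Lemma coord_scale (n : int) l u a b : mcoord l u a b -> mcoord (n *: l) (n * u) (n * a) (n * b).
Proof.
move=> [h [hh ->]]; exists (n *: h); split; first exact: hi_scale.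
by rewrite !scalerDr !scalerA.
Qed.

Lemma coord_opp l u a b : mcoord l u a b -> mcoord (- l) (- u) (- a) (- b).
Proof.
move=> h; have := coord_scale (-1) h.
by rewrite !scaleN1r !mulN1r.
Qed.

Lemma coord_sum (I : Type) (r : seq I) (f : I -> Pol E) (u a b : I -> int) :
  (forall x, mcoord (f x) (u x) (a x) (b x)) ->
  mcoord (\sum_(x <- r) f x) (\sum_(x <- r) u x) (\sum_(x <- r) a x) (\sum_(x <- r) b x).
Proof.
move=> h; elim: r => [|x r IH].
  rewrite !big_nil; exists 0; split; first exact: hi0.
  by rewrite !scale0r !addr0.
by rewrite !big_cons; apply: coord_add.
Qed.

Lemma coord_al : mcoord al 1 0 0.
Proof. by exists 0; split; [exact: hi0 | rewrite scale1r !scale0r !addr0]. Qed.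

Lemma coord_Z k : mcoord (Z k) 0 (k == 1)%N%:R (k == 2)%N%:R.
Proof.
case: k => [|[|[|k]]].
- by exists 0; split; [exact: hi0 | rewrite Z0 !scale0r !addr0].
- by exists 0; split; [exact: hi0 | rewrite /= scale0r scale1r scale0r add0r !addr0].
- by exists 0; split; [exact: hi0 | rewrite /= !scale0r scale1r add0r addr0 add0r].
- exists (Z k.+3); split; first exact: hi_Z.
  by rewrite /= !scale0r !add0r.
Qed.

Lemma Bf_coord l u a b l' u' a' b' : mcoord l u a b -> mcoord l' u' a' b' ->
  Bf l l' = u * u' + N1 M * (u * a' + a * u') + (N1 M - PP M) * a * a'
            + PP M * (a * b' + b * a') - N2' M * b * b'.
Proof.
move=> cl cl'.
have sl := coord_span cl; have sl' := coord_span cl'.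
move: cl cl' => [h [hh ->]] [h' [hh' ->]].
have z1 : forall X, lspan X -> Bf h X = 0 by move=> X sX; apply: (B_hi i loopM hrank hd hD).
have z2 : forall X, lspan X -> Bf X h' = 0.
  by move=> X sX; rewrite Bf_sym; apply: (B_hi i loopM hrank hd hD).
rewrite !(BfDl i hD) !(BfDr i hD) !(BfZl i hD) !(BfZr i hD).
rewrite (z1 _ span_al) (z1 _ (span_Z 1)) (z1 _ (span_Z 2)) (z1 _ (span_hi hh')) (z2 _ span_al) (z2 _ (span_Z 1)) (z2 _ (span_Z 2)).
rewrite (B_aa i loopM hrank hd hD) (BaZ1 i loopM hrank hd hD) (BaZ2 i loopM hrank hd hD).
rewrite (Bf_sym _ _ _ _ (Z 1) al) (Bf_sym _ _ _ _ (Z 2) al).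
rewrite (BaZ1 i loopM hrank hd hD) (BaZ2 i loopM hrank hd hD).
rewrite (BZ11 i loopM hrank hd hD) (BZ12 i loopM hrank hd hD) (Bf_sym _ _ _ _ (Z 2) (Z 1)).
rewrite (BZ12 i loopM hrank hd hD) (BZ22 i loopM hrank hd hD).
ring.
Qed.

End Coord.


Section Expand.
Variable (E : finType).
Implicit Types (p q r : Pol E).

Definition hi3 p := all (fun m => (3 <= mdeg m)%N) (msupp p).

Lemma hi3_0 : hi3 (0 : Pol E).
Proof. by rewrite /hi3 msupp0. Qed.

Lemma hi3_add p q : hi3 p -> hi3 q -> hi3 (p + q).
Proof.
move=> /allP hp /allP hq; apply/allP => m /msuppD_le.
by rewrite mem_cat => /orP[/hp|/hq].
Qed.

Lemma hi3_mull p r : hi3 r -> hi3 (p * r).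
Proof.
move=> /allP hr; apply/allP => m /msuppM_le /allpairsP [[m1 m2] [/= _ h2 ->]].
by rewrite mdegD; have := hr _ h2; lia.
Qed.

Lemma hi3_hom k p : (3 <= k)%N -> p \is k.-homog -> hi3 p.
Proof. by move=> k3 /dhomogP h; apply/allP => m /h /= ->. Qed.

Lemma pihomog_hi3 k p : (k < 3)%N -> hi3 p -> pihomog mdeg k p = 0.
Proof.
move=> k3 /allP h; rewrite pihomogE big_seq_cond big1 // => m /andP[/h hm /eqP hk].
by move: hm; rewrite /= hk; lia.
Qed.

Lemma expand (ls : seq (Pol E)) : all (fun l => l \is 1.-homog) ls ->
  exists q r, [/\ \prod_(l <- ls) (1 + l) = 1 + \sum_(l <- ls) l + q + r,
     q \is 2.-homog, q *+ 2 = (\sum_(l <- ls) l) ^+ 2 - \sum_(l <- ls) l ^+ 2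
     & hi3 r].
Proof.
elim: ls => [_|l ls IH /= /andP[hl hls]].
  exists 0, 0; rewrite !big_nil; split; rewrite ?addr0 ?rpred0 ?hi3_0 //.
  by rewrite mul0rn expr0n /= subr0.
have [q [r [e1 hq e2 hr]]] := IH hls.
have hs : \sum_(l <- ls) l \is 1.-homog by rewrite big_seq; apply: rpred_sum => x xl; exact: (allP hls x xl).
exists (q + l * \sum_(l <- ls) l), (r + l * q + l * r); rewrite !big_cons; split.
- by rewrite e1; ring.
- by apply: rpredD => //; apply: (dhomogM hl hs).
- by rewrite mulrnDl e2; ring.
- apply: hi3_add; last exact: hi3_mull.
  apply: hi3_add => //; apply: (@hi3_hom 3) => //; apply: (dhomogM hl hq).
Qed.

Lemma hpart_expand s q r : s \is 1.-homog -> q \is 2.-homog -> hi3 r ->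
  hpart 1 (1 + s + q + r) = s /\ hpart 2 (1 + s + q + r) = q.
Proof.
move=> hs hq hr; rewrite /hpart -!pihomogE !pihomogD.
rewrite !(pihomog_hi3 _ hr) // !addr0.
rewrite (pihomog_dE hs) (pihomog_dE hq).
rewrite (pihomog_ne0 (d := 1) (b := 2) _ hs) //.
rewrite (pihomog_ne0 (d := 2) (b := 1) _ hq) //.
rewrite (pihomog_ne0 (d := 0) (b := 1) _ (dhomog1 _ _)) //.
rewrite (pihomog_ne0 (d := 0) (b := 2) _ (dhomog1 _ _)) //.
by rewrite !add0r addr0.
Qed.

End Expand.


Section Basis.
Variables (E : finType) (M : matroid E).
Local Notation rk := (mrk M).

Definition indep (A : {set E}) := rk A == #|A|.

Lemma sub_indep (A B : {set E}) : indep B -> A \subset B -> rk A = #|A|.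
Proof.
move=> /eqP iB sAB.
have h := mrk_submod M A (B :\: A).
have e1 : A :|: (B :\: A) = B.
  apply/setP=> x; rewrite !inE; case xA: (x \in A) => //=.
  by rewrite (subsetP sAB _ xA).
have e2 : A :&: (B :\: A) = set0.
  by apply/setP=> x; rewrite !inE; case: (x \in A); rewrite ?andbF.
rewrite e1 e2 mrk0 iB in h.
have h3 := mrk_card M (B :\: A).
have h4 := mrk_card M A.
rewrite cardsD (setIidPr sAB) in h3.
have h5 := subset_leq_card sAB.
apply/eqP; rewrite eqn_leq h4 /=; lia.
Qed.

Lemma exists_basis : exists B, indep B /\ rk B = rk setT.
Proof.
have i0 : indep set0 by rewrite /indep mrk0 cards0.
case: (arg_maxnP (fun B : {set E} => #|B|) i0) => B iB maxB.
exists B; split => //.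
rewrite -(setUT B); symmetry; apply: rk_union_cl => e _.
case eB: (e \in B); first by rewrite (setUidPr _) // sub1set.
apply/eqP; rewrite eqn_leq [(rk B <= _)%N]mrk_mono ?subsetUr // andbT.
have := rk_add1 M B e; rewrite leq_eqVlt ltnS => /orP[/eqP h|//].
have : indep (e |: B) by rewrite /indep h cardsU1 eB (eqP iB).
move/maxB; rewrite cardsU1 eB; lia.
Qed.


Lemma N2_ge (d : nat) : rk setT = d.+1 -> ('C(d.+1, 2) <= N2 M)%N.
Proof.
move=> hr.
have [B [iB rB]] := exists_basis.
have cB : #|B| = d.+1 by rewrite -(eqP iB) rB hr.
pose sB := {x : E | x \in B}.
pose f := fun A : {set sB} => cl M [set val x | x in A].
pose S := [set A : {set sB} | #|A| == 2%N].
have cS : #|S| = 'C(d.+1, 2) by rewrite card_draws card_sig -cB.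
have hA : forall A : {set sB}, [set val x | x in A] \subset B.
  by move=> A; apply/subsetP=> x /imsetP [y _ ->]; apply: (valP y).
have rA : forall A : {set sB}, rk [set val x | x in A] = #|A|.
  by move=> A; rewrite (sub_indep iB (hA A)) card_imset //; apply: val_inj.
rewrite -cS -(card_in_imset (f := f)); last first.
  move=> A1 A2; rewrite /S !inE => /eqP c1 /eqP c2 e.
  apply: (imset_inj val_inj).
  set U1 := [set val x | x in A1]; set U2 := [set val x | x in A2].
  have s1 : U1 :|: U2 \subset cl M U1.
    by rewrite subUset sub_cl /=; have := sub_cl M U2; rewrite -/(f A2) -e.
  have sU : U1 :|: U2 \subset B by rewrite subUset !hA.
  have r12 := sub_indep iB sU.
  have := mrk_mono M s1; rewrite rk_cl r12 rA c1 => le.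
  have e1 : U1 == U1 :|: U2.
    by rewrite eqEcard subsetUl /= -/U1 card_imset ?c1 //; apply: val_inj.
  have e2 : U2 == U1 :|: U2.
    by rewrite eqEcard subsetUr /= -/U2 card_imset ?c2 //; apply: val_inj.
  by rewrite (eqP e1) -(eqP e2).
apply: subset_leq_card; apply/subsetP => F /imsetP [A]; rewrite /S inE => /eqP cA ->.
by rewrite inE /f cl_flat /= rk_cl rA cA.
Qed.

End Basis.


Lemma bin2x n : ('C(n, 2) * 2 = n * n.-1)%N.
Proof.
elim: n => [|n IH] //; rewrite binS bin1 mulnDl IH; case: n {IH} => [|n] //=; nia.
Qed.

Lemma sum1_seq (T : Type) (r : seq T) : \sum_(x <- r) (1 : int) = (size r)%:R.
Proof. by elim: r => [|x r IH]; rewrite ?big_nil ?big_cons ?IH //= mulrS. Qed.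

Definition Sf (E : finType) (M : matroid E) (d k : nat) : Pol E :=
  \sum_(1 <= j < k.+1) Zk M (d.+1 - j).

Section Final.
Variables (E : finType) (M : matroid E) (d : nat) (i : E) (D : Pol E -> int).
Hypothesis loopM : loopless M.
Hypothesis hrank : mrk M setT = d.+1.
Hypothesis hd : (2 <= d)%N.
Hypothesis hD : is_deg_map M d D.
Local Notation rk := (mrk M).
Local Notation al := (alpha M i).
Local Notation Z := (Zk M).
Local Notation mcoord := (mcoord M i).
Local Notation Bf := (Bf M d i D).
Local Notation S := (Sf M d).

Lemma coord_eq l u a b u' a' b' : mcoord l u a b -> u = u' -> a = a' -> b = b' ->
  mcoord l u' a' b'.
Proof. by move=> h <- <- <-. Qed.

Lemma coord0 : mcoord 0 0 0 0.
Proof. by exists 0; split; [exact: hi0 | rewrite !scale0r !addr0]. Qed.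

Lemma coord_sum_in (I : eqType) (r : seq I) (f : I -> Pol E) (u a b : I -> int) :
  (forall x, x \in r -> mcoord (f x) (u x) (a x) (b x)) ->
  mcoord (\sum_(x <- r) f x) (\sum_(x <- r) u x) (\sum_(x <- r) a x) (\sum_(x <- r) b x).
Proof.
elim: r => [|x r IH] h; first by rewrite !big_nil; exact: coord0.
rewrite !big_cons; apply: coord_add; first by apply: h; rewrite mem_head.
by apply: IH => y yr; apply: h; rewrite inE yr orbT.
Qed.

Lemma cZ k : mcoord (Z k) 0 (k == 1)%N%:R (k == 2)%N%:R.
Proof. exact: (coord_Z i loopM hrank hd). Qed.

Lemma coord_S k : (k <= d)%N -> mcoord (S k) 0 (k == d)%:R (d - 1 <= k)%N%:R.
Proof.
elim: k => [|k IH] hk.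
  rewrite /Sf big_geq //. apply: (coord_eq (l := 0) (u := 0) (a := 0) (b := 0)); first exact: coord0; try done.
    by have -> : (0 == d) = false by lia.
  by have -> : (d - 1 <= 0)%N = false by lia.
rewrite /Sf big_nat_recr //= -/(Sf M d k) subSS.
eapply coord_eq; first exact: (coord_add (IH (ltnW hk)) (cZ (d - k))).
- by rewrite addr0.
- by rewrite -natrD; congr (_%:R); lia.
- by rewrite -natrD; congr (_%:R); lia.
Qed.

Lemma coord_alS k : (k <= d)%N ->
  mcoord (al - S k) 1 (- (k == d)%:R) (- (d - 1 <= k)%N%:R).
Proof.
move=> hk; eapply coord_eq; first exact: (coord_add (coord_al M i) (coord_opp (coord_S hk))).
- by rewrite oppr0 addr0.
- by rewrite add0r.
- by rewrite add0r.
Qed.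

Lemma iota_split1 : index_iota 1 d.+1 = [:: 1; 2] ++ iota 3 (d - 2)%N.
Proof.
rewrite /index_iota subSS subn0 -{1}(subnK hd) addnC iotaD.
by [].
Qed.

Lemma iota_split2 : index_iota 0 d.+1 = iota 0 (d - 1)%N ++ [:: (d - 1)%N; d].
Proof.
rewrite /index_iota subn0.
have e : d.+1 = (d - 1 + 2)%N by lia.
rewrite e iotaD add0n /=.
by have -> : (d - 1).+1 = d by lia.
Qed.

Definition ls : seq (Pol E) :=
  [seq Z k | k <- index_iota 1 d.+1] ++ [seq al - S k | k <- index_iota 0 d.+1].

Lemma cM_eq : cM M d i = \prod_(l <- ls) (1 + l).
Proof.
rewrite /cM /ls big_cat !big_map /=; congr (_ * _).
by apply: eq_bigr => k _; rewrite /Sf addrA.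
Qed.

Lemma Z_hom k : Z k \is 1.-homog.
Proof. by apply: rpred_sum => F _; apply: xv_hom. Qed.

Lemma ls_hom : all (fun l => l \is 1.-homog) ls.
Proof.
apply/allP => l; rewrite mem_cat => /orP[] /mapP [k _ ->]; first exact: Z_hom.
apply: rpredB; first exact: sni_hom.
by apply: rpred_sum => j _; apply: Z_hom.
Qed.

Lemma sum_iota3 (f : nat -> int) : (forall k, (3 <= k)%N -> f k = 0) ->
  \sum_(k <- iota 3 (d - 2)%N) f k = 0.
Proof.
move=> h; rewrite big_seq big1 // => k; rewrite mem_iota => /andP[h3 _]; exact: h.
Qed.

Lemma sum_iota0 (f : nat -> int) c : (forall k, (k < d - 1)%N -> f k = c) ->
  \sum_(k <- iota 0 (d - 1)%N) f k = c * (d - 1)%N%:R.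
Proof.
move=> h; rewrite big_seq (eq_bigr (fun _ => c * 1)); last first.
  by move=> k; rewrite mem_iota add0n => /andP[_ hk]; rewrite mulr1; apply: h.
by rewrite -big_seq -mulr_sumr sum1_seq size_iota.
Qed.

Lemma coord_L : mcoord (\sum_(l <- ls) l) (d.+1)%:R 0 (-1).
Proof.
rewrite /ls big_cat !big_map iota_split1 iota_split2 !big_cat /= !big_cons !big_nil.
have c3 : mcoord (\sum_(k <- iota 3 (d - 2)%N) Z k) 0 0 0.
  eapply coord_eq; first exact: (coord_sum_in (r := iota 3 (d - 2)%N) (fun k _ => cZ k)).
  - by rewrite big1.
  - by rewrite sum_iota3 // => k h; have -> : (k == 1)%N = false by lia.
  - by rewrite sum_iota3 // => k h; have -> : (k == 2)%N = false by lia.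
have hk0 : forall k, k \in iota 0 (d - 1)%N -> (k <= d)%N.
  by move=> k; rewrite mem_iota => /andP[_ h]; move: h; lia.
have c0 : mcoord (\sum_(k <- iota 0 (d - 1)%N) (al - S k)) (d - 1)%N%:R 0 0.
  eapply coord_eq; first exact: (coord_sum_in (r := iota 0 (d - 1)%N) (f := fun k => al - S k)
                                   (fun k kin => coord_alS (hk0 k kin))).
  - by rewrite (sum_iota0 (c := 1)) ?mul1r.
  - by rewrite (sum_iota0 (c := 0)) ?mul0r // => k h; have -> : (k == d) = false by lia; rewrite oppr0.
  - by rewrite (sum_iota0 (c := 0)) ?mul0r // => k h; have -> : (d - 1 <= k)%N = false by lia; rewrite oppr0.
have c1 := coord_alS (leq_subr 1 d).
have c2 := coord_alS (leqnn d).
eapply coord_eq; first exact: (coord_add (coord_add (coord_add (cZ 1) (coord_add (cZ 2) coord0)) c3)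
   (coord_add c0 (coord_add c1 (coord_add c2 coord0)))).
- rewrite natrB; last lia.
  rewrite /= -addn1 natrD; ring.
- have -> : (d - 1 == d)%N = false by lia.
  rewrite !eqxx /=; ring.
- rewrite leqnn leq_subr !eqxx /=; ring.
Qed.


Lemma SQ : \sum_(l <- ls) Bf l l = (d.+1)%:R - 3%:R * N2' M.
Proof.
rewrite /ls big_cat !big_map iota_split1 iota_split2 !big_cat /= !big_cons !big_nil.
rewrite (sum_iota3 (f := fun k => Bf (Z k) (Z k))); last first.
  move=> k h; rewrite (Bf_coord loopM hrank hd hD (cZ k) (cZ k)).
  have -> : (k == 1)%N = false by lia.
  have -> : (k == 2)%N = false by lia.
  rewrite /=; ring.
have hk0 : forall k, (k < d - 1)%N -> (k <= d)%N by move=> k; lia.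
rewrite (sum_iota0 (f := fun k => Bf (al - S k) (al - S k)) (c := 1)); last first.
  move=> k h; rewrite (Bf_coord loopM hrank hd hD (coord_alS (hk0 k h)) (coord_alS (hk0 k h))).
  have -> : (k == d) = false by lia.
  have -> : (d - 1 <= k)%N = false by lia.
  rewrite /=; ring.
rewrite (Bf_coord loopM hrank hd hD (cZ 1) (cZ 1)) (Bf_coord loopM hrank hd hD (cZ 2) (cZ 2)).
rewrite (Bf_coord loopM hrank hd hD (coord_alS (leq_subr 1 d)) (coord_alS (leq_subr 1 d))).
rewrite (Bf_coord loopM hrank hd hD (coord_alS (leqnn d)) (coord_alS (leqnn d))).
have -> : (d - 1 == d)%N = false by lia.
rewrite leqnn leq_subr !eqxx /=.
rewrite natrB; last lia.
rewrite -addn1 natrD; ring.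
Qed.

Lemma BL : Bf (\sum_(l <- ls) l) (\sum_(l <- ls) l) = (d.+1)%:R ^+ 2 - N2' M.
Proof.
rewrite (Bf_coord loopM hrank hd hD coord_L coord_L); ring.
Qed.

Lemma N2'E : N2' M = (N2 M)%:R.
Proof.
rewrite /N2' /N2 (eq_bigr (fun _ => 1%N%:R)) // -natr_sum sum1dep_card; congr (_%:R).
apply: eq_card => F; rewrite !inE /npflat.
case: (is_flat M F) => //=; case r2: (rk F == 2%N); rewrite ?andbF ?andbT //.
apply/andP; split; apply/eqP => e; move: r2; rewrite e ?mrk0 ?hrank //.
by move/eqP => h; move: hd; rewrite -ltnS h.
Qed.

Lemma main_eq :
  D ((((d + 2)%:R : int) *: ck M d i 2 - ((2 * d)%:R : int) *: (ck M d i 1 ^+ 2))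
       * alpha M i ^+ (d - 2))
  = ((3 * d + 2)%:R : int) * ((N2 M)%:R - ('C(d.+1, 2))%:R).
Proof.
have [q [r [ecM hq eq2 hr]]] := expand ls_hom.
set L := \sum_(l <- ls) l in ecM eq2.
have hL : L \is 1.-homog.
  by rewrite /L big_seq; apply: rpred_sum => l lin; exact: (allP ls_hom l lin).
have [c1 c2] := hpart_expand hL hq hr.
have e1 : ck M d i 1 = L by rewrite /ck cM_eq ecM c1.
have e2 : ck M d i 2 = q by rewrite /ck cM_eq ecM c2.
rewrite e1 e2 mulrBl -!scalerAl (DB hD) !(DZ hD).
have hL2 : D (L ^+ 2 * al ^+ (d - 2)) = Bf L L by rewrite expr2.
have hq2 : D (q * al ^+ (d - 2)) *+ 2 = Bf L L - \sum_(l <- ls) Bf l l.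
  rewrite -(DMn hD) -mulrnAl eq2 mulrBl (DB hD) hL2 mulr_suml (Dsum hD).
  by congr (_ - _); apply: eq_bigr => l _; rewrite expr2.
rewrite SQ /L BL -/L in hq2.
have eC : ('C(d.+1, 2))%:R *+ 2 = (d.+1 * d)%:R :> int.
  by rewrite -mulr_natr -natrM bin2x.
apply: (pmulrnI (n := 2)) => //=.
rewrite !mulrnBl -!mulrnAr hq2 hL2 /L BL -/L.
rewrite [X in _ = _ * X]mulrnBl eC N2'E; ring.
Qed.

End Final.

Unset Implicit Arguments.

Theorem corollary4p15 (E : finType) (M : matroid E) (d : nat) (i : E)
    (D : Pol E -> int) :
  loopless M -> mrank M = d.+1 -> (2 <= d)%N -> is_deg_map M d D ->
  D ((((d + 2)%:R : int) *: ck M d i 2 - ((2 * d)%:R : int) *: (ck M d i 1 ^+ 2))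
       * alpha M i ^+ (d - 2))
  = ((3 * d + 2)%:R : int) * ((N2 M)%:R - ('C(d.+1, 2))%:R)
  /\ 0 <= ((3 * d + 2)%:R : int) * ((N2 M)%:R - ('C(d.+1, 2))%:R).
Proof.
move=> loopM hrank hd hD; split; first exact: main_eq.
apply: mulr_ge0 => //; rewrite subr_ge0 ler_nat.
exact: N2_ge.
Qed.
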